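(* In the setting of the context, suppose $G_2$ is a $p$-group and $S$ is a simple $KH_1$-module with $H_1^2=H_1$. Then $G_2'=H_2$ and $G_1''=G_1$.
   Context: $K$ is algebraically closed of characteristic zero; $G_2$ is a finite group with normal subgroups $G_1$, $H_2$, and $H_1=G_1\cap H_2$, all normal in $G_2$, with $G_2=G_1H_2$ and $[G_2:G_1]=[H_2:H_1]=p$. For a normal subgroup $N$ of a group $X$, an $N$-module $W$ and $x\in X$, ${}^xW$ is $W$ with action $n\cdot w=(x^{-1}nx)w$, and $I_X(W)=\{x\in X:{}^xW\cong W\}$. For a simple $KH_1$-module $S$: $H_1^2=I_{G_2}(S)$. When $H_1^2=H_1$, the modules $T=\operatorname{Ind}_{H_1}^{H_2}S$ (the $KH_2$-module $KH_2S$) and $T'=\operatorname{Ind}_{H_1}^{G_1}S$ (the $KG_1$-module $KG_1S$) are simple, and the decomposition groups are $G_2'=I_{G_2}(T)$ and $G_1''=I_{G_2}(T')$. *)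

(* Defs.v *)
(* Modules over K (alg. closed, char 0) are represented up to
   isomorphism by their characters over algC. *)
From HB Require Import structures.
From mathcomp Require Import all_boot all_order all_algebra all_fingroup all_solvable.
From mathcomp Require Import all_field all_character.
Set Implicit Arguments.
Unset Strict Implicit.
Unset Printing Implicit Defensive.

(* Main.v *)
Require Import Defs.
From HB Require Import structures.
From mathcomp Require Import all_boot all_order all_algebra all_fingroup all_solvable.
From mathcomp Require Import all_field all_character.
Import GroupScope.
Import GRing.Theory Num.Theory.
Local Open Scope ring_scope.

Lemma inertia_Ind_key (gT : finGroupType) (G N H : {group gT}) (i : Iirr N) :
  H <| G -> N <| G -> N \subset H -> 'I_G['chi_i] \subset H ->
  'I_G['Ind[H] 'chi_i] :=: H.
Proof.
move=> nsHG nsNG sNH sIH.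
have [sHG nHG] := andP nsHG; have [sNG nNG] := andP nsNG.
have nsNH : N <| H by rewrite (normalS sNH sHG nsNG).
apply/eqP; rewrite eqEsubset sub_Inertia // andbT.
apply/subsetP=> g /setIP[Gg /setIdP[nHg /eqP Ig]].
have nNg : g \in 'N(N) := subsetP nNG g Gg.
rewrite cfConjgInd_norm // in Ig.
set psi := ('chi_i ^ g)%CF in Ig.
have Hchi0 : 'Ind[H] 'chi_i != 0.
  by rewrite cfInd_eq0 ?irr_char ?irr_neq0.
have : '[psi, 'Res[N] ('Ind[H] 'chi_i)] != 0.
  by rewrite Frobenius_reciprocity Ig cfnorm_eq0.
rewrite cfResInd // cfdotZr cfdot_sumr mulf_eq0 negb_or => /andP[_].
case: (pickP (fun y => (y \in H) && ('[psi, 'chi_i ^ y]%CF != 0))) => [y /andP[Hy nz] _ | none].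
  have nNy : y \in 'N(N) := subsetP (normal_norm nsNH) y Hy.
  move: nz; rewrite /psi -!conjg_IirrE cfdot_irr pnatr_eq0 eqb0 negbK.
  move/eqP/(congr1 (fun j => 'chi_j)); rewrite !conjg_IirrE => eqc.
  have Iyg : (y * g^-1)%g \in 'I_G['chi_i].
    apply/setIP; split; first by rewrite groupM ?groupV // (subsetP sHG y Hy).
    apply/setIdP; split; first by rewrite groupM ?groupV.
    by rewrite cfConjgMnorm ?groupV // -eqc cfConjgK.
  have Hyg := subsetP sIH _ Iyg.
  have -> : g = ((y * g^-1)^-1 * y)%g by rewrite invMg invgK -mulgA mulVg mulg1.
  by rewrite groupM ?groupV.
rewrite big1 ?eqxx // => y Hy; move: (none y); rewrite Hy /=.
by move/negbT; rewrite negbK => /eqP.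
Qed.

Theorem mainTheorem15 (gT : finGroupType) (p : nat) (G1 G2 H1 H2 : {group gT})
    (i : Iirr H1) :
  prime p -> p.-group G2 ->
  G1 <| G2 -> H2 <| G2 -> H1 :=: G1 :&: H2 -> H1 <| G2 ->
  G2 :=: (G1 * H2)%g -> #|G2 : G1| = p -> #|H2 : H1| = p ->
  'I_G2['chi_i] :=: H1 ->
  'I_G2['Ind[H2] 'chi_i] :=: H2 /\ 'I_G2['Ind[G1] 'chi_i] :=: G1.
Proof.
move=> _ _ nsG1 nsH2 defH1 nsH1 _ _ _ defI.
have sH1G1 : H1 \subset G1 by rewrite defH1 subsetIl.
have sH1H2 : H1 \subset H2 by rewrite defH1 subsetIr.
split; apply: inertia_Ind_key => //; by rewrite defI.
Qed.
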